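(* Let $H$ be a Kekul\'ean hexagonal system. Then $\zeta(H,x)=C(R(H),x)$, i.e. $z(H,i)=\alpha_i(R(H))$ for every $i\ge 0$.
   Context: A hexagonal system is a 2-connected finite plane graph in which every interior face is a regular hexagon of side length one (equivalently, a cycle of the infinite hexagonal lattice together with its interior); its hexagons are the boundaries of its interior faces. It is Kekul\'ean if it has a perfect matching. A Clar cover of $H$ is a spanning subgraph of $H$ each of whose components is either a hexagon of $H$ or a single edge ($K_2$). Let $z(H,k)$ be the number of Clar covers of $H$ with exactly $k$ hexagon components, and $Cl(H)$ the maximum such $k$. The Clar covering polynomial is $\zeta(H,x)=\sum_{k=0}^{Cl(H)} z(H,k)x^k$. The resonance graph $R(H)$ has the perfect matchings of $H$ as vertices, two being adjacent iff their symmetric difference is the edge set of a hexagon of $H$. For a graph $G$, the cube polynomial is $C(G,x)=\sum_{i\ge0}\alpha_i(G)x^i$, where $\alpha_i(G)$ is the number of induced subgraphs of $G$ isomorphic to the $i$-dimensional hypercube $Q_i$. *)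

(* Defs.v *)
From mathcomp Require Import all_boot all_order all_algebra.
From mathcomp Require Import finmap.
Set Implicit Arguments.
Unset Strict Implicit.
Unset Printing Implicit Defensive.
Local Open Scope fset_scope.

(** Vertices are points (x,y) of Z^2.  Edges: horizontal (x,y)-(x+1,y) for all
  (x,y), vertical (x,y)-(x,y+1) when x+y is even.  This graph, with its
  obvious plane embedding, is the hexagonal lattice; its faces ("cells",
  regular hexagons) are the bricks with lower-left corner (x,y), x+y even.
  A cell is indexed by (i,j) : int * int, with lower-left corner
  (2i+j, j) (axial coordinates). *)

Definition vert := (int * int)%type.
Definition cell := (int * int)%type.
(** an edge is stored in its canonical orientation (left->right for
    horizontal edges, bottom->top for vertical edges) *)
Definition edge := (vert * vert)%type.

Definition anchor (c : cell) : vert := (2 * c.1 + c.2, c.2)%R.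

Definition hex_verts (c : cell) : seq vert :=
  let: (x, y) := anchor c in
  [:: (x, y); (x + 1, y); (x + 2, y);
      (x, y + 1); (x + 1, y + 1); (x + 2, y + 1)]%R.

Definition hex_edges (c : cell) : seq edge :=
  let: (x, y) := anchor c in
  [:: ((x, y), (x + 1, y)); ((x + 1, y), (x + 2, y));
      ((x, y + 1), (x + 1, y + 1)); ((x + 1, y + 1), (x + 2, y + 1));
      ((x, y), (x, y + 1)); ((x + 2, y), (x + 2, y + 1))]%R.

(** two cells are adjacent iff they share an edge (six neighbours) *)
Definition cell_adj (c d : cell) : bool :=
  d \in [:: (c.1 + 1, c.2); (c.1 - 1, c.2); (c.1, c.2 + 1);
            (c.1 - 1, c.2 + 1); (c.1, c.2 - 1); (c.1 + 1, c.2 - 1)]%R.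

(** A hexagonal system is given by the finite set S of its hexagons (cells of
  the lattice).  "A cycle of the hexagonal lattice together with its
  interior" is the same as a nonempty finite set of cells which is
  connected (through shared edges) and has no holes, i.e. whose complement
  in the set of all cells is connected. *)

Definition cells_connected (S : {fset cell}) : Prop :=
  forall c d, c \in S -> d \in S ->
    exists p : seq cell, [/\ path cell_adj c p, last c p = d & all (mem S) p].

Definition complement_connected (S : {fset cell}) : Prop :=
  forall c d, c \notin S -> d \notin S ->
    exists p : seq cell,
      [/\ path cell_adj c p, last c p = d & all (fun x => x \notin S) p].

Definition hexagonal_system (S : {fset cell}) : Prop :=
  [/\ S != fset0, cells_connected S & complement_connected S].

Definition HE (S : {fset cell}) : {fset edge} :=
  \bigcup_(c <- S) [fset e | e in hex_edges c].
Definition HV (S : {fset cell}) : {fset vert} :=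
  \bigcup_(c <- S) [fset v | v in hex_verts c].

Definition incid (v : vert) (e : edge) : bool := (e.1 == v) || (e.2 == v).

Section HexSystem.
Variable S : {fset cell}.

Definition deg (F : {set HE S}) (v : vert) : nat :=
  #|[set e in F | incid v (val e)]|.

Definition perfect_matching (M : {set HE S}) : bool :=
  [forall v : HV S, deg M (val v) == 1%N].

Definition kekulean : Prop := exists M : {set HE S}, perfect_matching M.

(** the hexagon h (a hexagon of H) is a connected component of the spanning
    subgraph (V(H), F): all its edges are in F and no other edge of F meets
    it (every vertex of h has F-degree 2) *)
Definition hex_comp (F : {set HE S}) (h : cell) : bool :=
  [&& h \in S,
      [forall e : HE S, (val e \in hex_edges h) ==> (e \in F)] &
      all (fun v => deg F v == 2%N) (hex_verts h)].

Definition edge_comp (F : {set HE S}) (e : HE S) : bool :=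
  [&& e \in F, deg F (val e).1 == 1%N & deg F (val e).2 == 1%N].

(** Clar cover: spanning subgraph (V(H), F) every component of which is a
    hexagon of H or a K2, i.e. every vertex of H lies in such a component *)
Definition clar_cover (F : {set HE S}) : bool :=
  [forall v : HV S,
     [exists h : S, hex_comp F (val h) && (val v \in hex_verts (val h))]
     || [exists e : HE S, edge_comp F e && incid (val v) (val e)]].

Definition nhex (F : {set HE S}) : nat := #|[set h : S | hex_comp F (val h)]|.

Definition zClar (k : nat) : nat :=
  #|[set F : {set HE S} | clar_cover F && (nhex F == k)]|.

Definition res_adj (M N : {set HE S}) : bool :=
  [exists h : S, [forall e : HE S,
     ((e \in M) != (e \in N)) == (val e \in hex_edges (val h))]].

(** the hypercube Q_i : vertices are subsets of 'I_i (= 0/1-strings of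
    length i), adjacent iff they differ in exactly one coordinate *)
Definition cube_adj (i : nat) (a b : {set 'I_i}) : bool :=
  #|(a :\: b) :|: (b :\: a)| == 1%N.

Definition induces_cube (i : nat) (W : {set {set HE S}}) : bool :=
  [exists f : {ffun {set 'I_i} -> {set HE S}},
     [&& injectiveb f, [set f a | a in [set: {set 'I_i}]] == W &
         [forall a, forall b, res_adj (f a) (f b) == cube_adj a b]]].

Definition alpha (i : nat) : nat :=
  #|[set W : {set {set HE S}} |
       [forall M in W, perfect_matching M] && induces_cube i W]|.

End HexSystem.

(* Main.v *)
Require Import Defs.
From mathcomp Require Import all_boot all_order all_algebra.
From mathcomp Require Import finmap.
From mathcomp Require Import zify.
Set Implicit Arguments.
Unset Strict Implicit.
Unset Printing Implicit Defensive.
Import GRing.Theory.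
Definition hAl (c : cell) : seq edge :=
  let: (x, y) := anchor c in
  [:: ((x, y), (x + 1, y)); ((x + 2, y), (x + 2, y + 1));
      ((x, y + 1), (x + 1, y + 1))]%R.
Definition hBl (c : cell) : seq edge :=
  let: (x, y) := anchor c in
  [:: ((x + 1, y), (x + 2, y)); ((x + 1, y + 1), (x + 2, y + 1));
      ((x, y), (x, y + 1))]%R.

Lemma ea2 (x a b : int) : (x + a == x + b)%R = (a == b).
Proof. by rewrite (inj_eq (addrI x)). Qed.
Lemma ea1 (x a : int) : (x + a == x)%R = (a == 0%R).
Proof. by rewrite -{2}(addr0 x) ea2. Qed.
Lemma ea0 (x a : int) : (x == x + a)%R = (0%R == a).
Proof. by rewrite -{1}(addr0 x) ea2. Qed.
Ltac dec_ints := rewrite ?eqxx ?ea2 ?ea1 ?ea0 //=.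

Lemma V_mem c e : (e \in hex_edges c) = (e \in hAl c) || (e \in hBl c).
Proof.
case: c => i j; rewrite /hex_edges /hAl /hBl /= !inE.
by do 6 case: (e == _); rewrite ?orbT.
Qed.

Lemma V_uniq c : uniq (hex_edges c).
Proof.
case: c => i j; rewrite /hex_edges /= !inE !xpair_eqE.
by dec_ints.
Qed.

Ltac hsplit := repeat match goal with
 | H : is_true (_ || _) |- _ => case/orP: H => H
 | H : is_true (_ && _) |- _ => let H' := fresh "H" in case/andP: H => H H'
 | H : is_true (_ == _) |- _ => move/eqP: H => H
end.

Lemma V_share_int (i j k l a1 b1 c1 d1 a2 b2 c2 d2 : int) :
  ((a1,b1),(c1,d1)) \in hex_edges (i,j) -> ((a1,b1),(c1,d1)) \in hex_edges (k,l) ->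
  ((a2,b2),(c2,d2)) \in hex_edges (i,j) -> ((a2,b2),(c2,d2)) \in hex_edges (k,l) ->
  (i = k /\ j = l) \/ (a1 = a2 /\ b1 = b2 /\ c1 = c2 /\ d1 = d2).
Proof.
rewrite /hex_edges /= !inE !xpair_eqE => H1 H2 H3 H4.
move: H3 H4; hsplit; subst; (first [left; lia | idtac]); move=> H3 H4; hsplit; subst; lia.
Qed.

Lemma V_share (c d : cell) (e1 e2 : edge) :
  e1 \in hex_edges c -> e1 \in hex_edges d -> e2 \in hex_edges c -> e2 \in hex_edges d ->
  e1 != e2 -> c = d.
Proof.
case: c d e1 e2 => i j [k l] [[a1 b1] [c1 d1]] [[a2 b2] [c2 d2]] H1 H2 H3 H4 H5.
case: (V_share_int H1 H2 H3 H4) => [[-> ->] //|[? [? [? ?]]]]; subst.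
by rewrite eqxx in H5.
Qed.

Lemma V_vert c e v : e \in hex_edges c -> incid v e -> v \in hex_verts c.
Proof.
case: c => i j; rewrite /hex_edges /hex_verts /incid /= !inE.
by move=> H; hsplit; subst => /orP [] /eqP <-; rewrite ?eqxx ?orbT.
Qed.

Lemma V_at c v : v \in hex_verts c -> exists a b, [/\ a \in hAl c, b \in hBl c &
   forall e, e \in hex_edges c -> incid v e = (e == a) || (e == b)].
Proof.
case: c => i j; rewrite /hex_edges /hex_verts /hAl /hBl /= !inE => H; hsplit; subst.
- exists (((2*i+j), j), ((2*i+j+1), j))%R, (((2*i+j), j), ((2*i+j), (j+1)))%R; split; rewrite ?inE ?eqxx ?orbT //.
  move=> e; rewrite !inE => H; hsplit; subst; rewrite /incid /= !xpair_eqE; by dec_ints.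
- exists (((2*i+j), j), ((2*i+j+1), j))%R, (((2*i+j+1), j), ((2*i+j+2), j))%R; split; rewrite ?inE ?eqxx ?orbT //.
  move=> e; rewrite !inE => H; hsplit; subst; rewrite /incid /= !xpair_eqE; by dec_ints.
- exists (((2*i+j+2), j), ((2*i+j+2), (j+1)))%R, (((2*i+j+1), j), ((2*i+j+2), j))%R; split; rewrite ?inE ?eqxx ?orbT //.
  move=> e; rewrite !inE => H; hsplit; subst; rewrite /incid /= !xpair_eqE; by dec_ints.
- exists (((2*i+j), (j+1)), ((2*i+j+1), (j+1)))%R, (((2*i+j), j), ((2*i+j), (j+1)))%R; split; rewrite ?inE ?eqxx ?orbT //.
  move=> e; rewrite !inE => H; hsplit; subst; rewrite /incid /= !xpair_eqE; by dec_ints.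
- exists (((2*i+j), (j+1)), ((2*i+j+1), (j+1)))%R, (((2*i+j+1), (j+1)), ((2*i+j+2), (j+1)))%R; split; rewrite ?inE ?eqxx ?orbT //.
  move=> e; rewrite !inE => H; hsplit; subst; rewrite /incid /= !xpair_eqE; by dec_ints.
- exists (((2*i+j+2), j), ((2*i+j+2), (j+1)))%R, (((2*i+j+1), (j+1)), ((2*i+j+2), (j+1)))%R; split; rewrite ?inE ?eqxx ?orbT //.
  move=> e; rewrite !inE => H; hsplit; subst; rewrite /incid /= !xpair_eqE; by dec_ints.
Qed.

Lemma V_chain c (P : edge -> bool) :
  (forall v e1 e2, v \in hex_verts c -> e1 \in hex_edges c -> e2 \in hex_edges c ->
     incid v e1 -> incid v e2 -> P e1 = P e2) ->
  forall e1 e2, e1 \in hex_edges c -> e2 \in hex_edges c -> P e1 = P e2.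
Proof.
case: c => i j; rewrite /hex_edges /hex_verts /= => H.
set x := (2 * i + j)%R.
have G v e1 e2 : v \in [:: (x, j); (x + 1, j); (x + 2, j); (x, j + 1); (x + 1, j + 1); (x + 2, j + 1)]%R ->
  e1 \in [:: (x, j, (x + 1, j)); (x + 1, j, (x + 2, j)); (x, j + 1, (x + 1, j + 1));
          (x + 1, j + 1, (x + 2, j + 1)); (x, j, (x, j + 1)); (x + 2, j, (x + 2, j + 1))]%R ->
  e2 \in [:: (x, j, (x + 1, j)); (x + 1, j, (x + 2, j)); (x, j + 1, (x + 1, j + 1));
          (x + 1, j + 1, (x + 2, j + 1)); (x, j, (x, j + 1)); (x + 2, j, (x + 2, j + 1))]%R ->
  incid v e1 -> incid v e2 -> P e1 = P e2 by exact: H.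
have E1 : P (x, j, (x + 1, j))%R = P (x + 1, j, (x + 2, j))%R.
  by apply: (G (x + 1, j)%R); rewrite /incid ?inE ?eqxx ?orbT.
have E2 : P (x + 1, j, (x + 2, j))%R = P (x + 2, j, (x + 2, j + 1))%R.
  by apply: (G (x + 2, j)%R); rewrite /incid ?inE ?eqxx ?orbT.
have E3 : P (x + 2, j, (x + 2, j + 1))%R = P (x + 1, j + 1, (x + 2, j + 1))%R.
  by apply: (G (x + 2, j + 1)%R); rewrite /incid ?inE ?eqxx ?orbT.
have E4 : P (x + 1, j + 1, (x + 2, j + 1))%R = P (x, j + 1, (x + 1, j + 1))%R.
  by apply: (G (x + 1, j + 1)%R); rewrite /incid ?inE ?eqxx ?orbT.
have E5 : P (x, j + 1, (x + 1, j + 1))%R = P (x, j, (x, j + 1))%R.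
  by apply: (G (x, j + 1)%R); rewrite /incid ?inE ?eqxx ?orbT.
suff K e : e \in [:: (x, j, (x + 1, j)); (x + 1, j, (x + 2, j)); (x, j + 1, (x + 1, j + 1));
          (x + 1, j + 1, (x + 2, j + 1)); (x, j, (x, j + 1)); (x + 2, j, (x + 2, j + 1))]%R ->
   P e = P (x, j, (x + 1, j))%R.
  by move=> e1 e2 /K -> /K ->.
rewrite !inE => He; hsplit; subst; congruence.
Qed.

Lemma V_uniqAB c : uniq (hAl c ++ hBl c).
Proof.
case: c => i j; rewrite /hAl /hBl /= !inE !xpair_eqE.
by dec_ints.
Qed.

Lemma V_disjAB c e : e \in hAl c -> e \in hBl c -> False.
Proof.
have := V_uniqAB c; rewrite cat_uniq => /and3P [_ /hasPn H _] Ha Hb.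
by move: (H e Hb); rewrite Ha.
Qed.

Lemma V_anchor c : anchor c \in hex_verts c.
Proof. by case: c => i j; rewrite /hex_verts /= mem_head. Qed.

Lemma V_incid1 (e : edge) : incid e.1 e.
Proof. by rewrite /incid eqxx. Qed.
Lemma V_incid2 (e : edge) : incid e.2 e.
Proof. by rewrite /incid eqxx orbT. Qed.

Local Open Scope fset_scope.

Section Sets.
Variable S : {fset cell}.
Notation E := (HE S).

Definition at_ (v : vert) : {set E} := [set e : E | incid v (val e)].
Definition hx (c : cell) : {set E} := [set e : E | val e \in hex_edges c].
Definition hA (c : cell) : {set E} := [set e : E | val e \in hAl c].
Definition hB (c : cell) : {set E} := [set e : E | val e \in hBl c].
Definition sd (A B : {set E}) : {set E} := [set e | (e \in A) (+) (e \in B)].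
Definition pm (M : {set E}) := forall v, v \in HV S -> #|M :&: at_ v| = 1.

Lemma in_sd A B e : (e \in sd A B) = (e \in A) (+) (e \in B).
Proof. by rewrite inE. Qed.

Lemma degE M v : deg M v = #|M :&: at_ v|.
Proof. by rewrite /deg setIdE. Qed.

Lemma pmP M : perfect_matching M <-> pm M.
Proof.
split.
- move=> /forallP H v Hv; have := H [` Hv]; by rewrite degE => /eqP.
- move=> H; apply/forallP => v; rewrite degE H //; exact: fsvalP.
Qed.

Lemma HE_in c e : c \in S -> e \in hex_edges c -> e \in E.
Proof.
move=> Hc He; apply/bigfcupP; exists c; first by rewrite Hc.
by rewrite in_fset.
Qed.

Lemma HV_in c v : c \in S -> v \in hex_verts c -> v \in HV S.
Proof.
move=> Hc He; apply/bigfcupP; exists c; first by rewrite Hc.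
by rewrite in_fset.
Qed.

Lemma HE_cell (e : E) : exists2 c, c \in S & val e \in hex_edges c.
Proof.
have := fsvalP e; move=> /bigfcupP [c /andP [Hc _]]; rewrite in_fset => H.
by exists c.
Qed.

Lemma end_HV (e : E) v : incid v (val e) -> v \in HV S.
Proof.
case: (HE_cell e) => c Hc He Hi; apply: (HV_in Hc); exact: V_vert He Hi.
Qed.

Lemma card_seqset (s : seq edge) : uniq s -> {subset s <= E} ->
  #|[set e : E | val e \in s]| = size s.
Proof.
move=> Us Ss; rewrite cardE -(size_map val); apply: perm_size.
apply: uniq_perm; first by rewrite (map_inj_uniq val_inj) enum_uniq.
  exact: Us.
move=> x; apply/mapP/idP => [[e]|Hx].
  by rewrite mem_enum inE => H ->.
by exists [` Ss x Hx]; rewrite // mem_enum inE.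
Qed.

Lemma hx_card c : c \in S -> #|hx c| = 6.
Proof.
move=> Hc; rewrite card_seqset //; first exact: V_uniq.
by move=> e; apply: HE_in.
Qed.

Lemma hxE c : hx c = hA c :|: hB c.
Proof. by apply/setP => e; rewrite in_setU !in_set V_mem. Qed.

Lemma hAB c e : e \in hA c -> e \in hB c -> False.
Proof. rewrite !in_set; exact: V_disjAB. Qed.

Lemma hx_vert c e v : e \in hx c -> e \in at_ v -> v \in hex_verts c.
Proof. rewrite !in_set; exact: V_vert. Qed.

Lemma hx_share c d e1 e2 : e1 \in hx c -> e1 \in hx d -> e2 \in hx c -> e2 \in hx d ->
  e1 != e2 -> c = d.
Proof.
rewrite !in_set => H1 H2 H3 H4 H5; apply: (V_share H1 H2 H3 H4).
by rewrite (inj_eq val_inj).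
Qed.

Lemma hx_meet c d : c != d -> #|hx c :&: hx d| <= 1.
Proof.
move=> Hcd; rewrite leqNgt; apply/negP => /card_gt1P [e1 [e2 [H1 H2 H12]]].
move: H1 H2; rewrite !in_setI => /andP [H1 H1'] /andP [H2 H2'].
by rewrite (hx_share H1 H1' H2 H2' H12) eqxx in Hcd.
Qed.

Lemma hx_at c v : c \in S -> v \in hex_verts c ->
  exists a b, [/\ a \in hA c, b \in hB c & hx c :&: at_ v = [set a; b]].
Proof.
move=> Hc Hv; have [a [b [Ha Hb He]]] := V_at Hv.
have HaE : a \in E by apply: (HE_in Hc); rewrite V_mem Ha.
have HbE : b \in E by apply: (HE_in Hc); rewrite V_mem Hb orbT.
exists [` HaE], [` HbE]; split; rewrite ?in_set //.
apply/setP => e; rewrite in_set2 in_setI !in_set.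
case He': (val e \in hex_edges c); last first.
  apply/esym/negbTE; apply/negP => /orP [] /eqP Ee; move: He'; rewrite Ee /= V_mem ?Ha ?Hb ?orbT //.
by rewrite He //= -!(inj_eq val_inj).
Qed.

Lemma hx_at2 c v : c \in S -> v \in hex_verts c -> #|hx c :&: at_ v| = 2.
Proof.
move=> Hc Hv; have [a [b [Ha Hb ->]]] := hx_at Hc Hv.
rewrite cards2; case: eqP => // Eab; subst; case: (hAB Ha Hb).
Qed.

Lemma hx_chain c (P : pred E) : c \in S ->
  (forall v e1 e2, v \in hex_verts c -> e1 \in hx c -> e2 \in hx c ->
     e1 \in at_ v -> e2 \in at_ v -> P e1 = P e2) ->
  forall e1 e2, e1 \in hx c -> e2 \in hx c -> P e1 = P e2.
Proof.
move=> Hc H e1 e2 H1 H2.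
pose Q (x : edge) := if insub x is Some e then P e else false.
have QE (e : E) : Q (val e) = P e by rewrite /Q valK.
rewrite -!QE; move: H1 H2; rewrite !in_set; apply: V_chain => v x1 x2 Hv Hx1 Hx2 I1 I2.
have HxE1 : x1 \in E by exact: HE_in Hc Hx1.
have HxE2 : x2 \in E by exact: HE_in Hc Hx2.
have -> : x1 = val [` HxE1] by [].
have -> : x2 = val [` HxE2] by [].
by rewrite !QE; apply: (H v); rewrite ?in_set.
Qed.


Lemma pm1 M v : pm M -> v \in HV S -> exists e, M :&: at_ v = [set e].
Proof. by move=> H Hv; apply/cards1P; rewrite H. Qed.

Lemma sdI A B C : sd A B :&: C = sd (A :&: C) (B :&: C).
Proof.
apply/setP => e; rewrite !in_setI !in_sd !in_setI.
by case: (e \in A); case: (e \in B); case: (e \in C).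
Qed.

Lemma hx_at_out c v : v \notin hex_verts c -> hx c :&: at_ v = set0.
Proof.
move=> Hv; apply/setP => e; rewrite in_setI in_set0.
apply/negP => /andP [H1 H2]; by rewrite (hx_vert H1 H2) in Hv.
Qed.

Lemma hA_sub c : hA c \subset hx c.
Proof. by rewrite hxE subsetUl. Qed.
Lemma hB_sub c : hB c \subset hx c.
Proof. by rewrite hxE subsetUr. Qed.

Lemma alt_local M c v : pm M -> pm (sd M (hx c)) -> c \in S -> v \in hex_verts c ->
  M :&: at_ v \subset hx c.
Proof.
move=> HM HMc Hc Hv.
have Hv' : v \in HV S by exact: HV_in Hc Hv.
have [e He] := pm1 HM Hv'.
have [a [b [Ha Hb Hab]]] := hx_at Hc Hv.
rewrite He sub1set; apply/negP => Hne.
have Hab' : a != b by apply/negP => /eqP E1; subst; case: (hAB Ha Hb).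
have Ha2 : a \in hx c :&: at_ v by rewrite Hab in_set2 eqxx.
have Hb2 : b \in hx c :&: at_ v by rewrite Hab in_set2 eqxx orbT.
have notM x : x \in hx c :&: at_ v -> x \in sd M (hx c) :&: at_ v.
  rewrite !in_setI in_sd => /andP [Hx1 Hx2]; rewrite Hx1 Hx2 andbT addbT.
  apply/negP => HxM; have : x \in M :&: at_ v by rewrite in_setI HxM.
  by rewrite He in_set1 => /eqP E1; subst; rewrite Hx1 in Hne.
have : #|[set a; b]| <= #|sd M (hx c) :&: at_ v|.
  by apply: subset_leq_card; apply/subsetP => x; rewrite in_set2 => /orP [] /eqP ->; apply: notM.
by rewrite cards2 Hab' HMc.
Qed.

Lemma alt_edge M c v : pm M -> pm (sd M (hx c)) -> c \in S -> v \in hex_verts c ->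
  exists2 e, M :&: at_ v = [set e] & e \in hx c.
Proof.
move=> HM HMc Hc Hv.
have [e He] := pm1 HM (HV_in Hc Hv).
exists e => //; have := alt_local HM HMc Hc Hv; rewrite He sub1set //.
Qed.


Lemma sd0 A : sd A set0 = A.
Proof. by apply/setP => e; rewrite in_sd in_set0 addbF. Qed.

Lemma at_incid1 (e : E) : e \in at_ (val e).1.
Proof. by rewrite in_set V_incid1. Qed.
Lemma at_incid2 (e : E) : e \in at_ (val e).2.
Proof. by rewrite in_set V_incid2. Qed.

Lemma res_adjE X Y : res_adj X Y = [exists c : S, sd X Y == hx (val c)].
Proof.
apply: eq_existsb => c; apply/forallP/eqP => [H|H e].
  apply/setP => e; have := H e; rewrite in_sd in_set => /eqP <-.
  by case: (e \in X); case: (e \in Y).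
move/setP: H => /(_ e); rewrite in_sd in_set => <-.
by case: (e \in X); case: (e \in Y).
Qed.

Lemma cardU_le (A B : {set E}) : #|A :|: B| <= #|A| + #|B|.
Proof. by rewrite cardsU leq_subr. Qed.

Lemma sdC A B : sd A B = sd B A.
Proof. by apply/setP => e; rewrite !in_sd addbC. Qed.

Lemma sdK A B : sd (sd A B) B = A.
Proof. by apply/setP => e; rewrite !in_sd -addbA addbb addbF. Qed.

Lemma square_key x y x' y' : x \in S -> y \in S -> x' \in S -> y' \in S -> x' != y' ->
  sd (hx x) (hx y) = sd (hx x') (hx y') -> x' = x \/ x' = y.
Proof.
move=> Hx Hy Hx' Hy' Hxy' Heq.
case: (eqVneq x' x) => [->|N1]; first by left.
case: (eqVneq x' y) => [->|N2]; first by right.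
exfalso.
have Hsub : hx x' \subset ((hx x' :&: hx x) :|: (hx x' :&: hx y)) :|: (hx x' :&: hx y').
  apply/subsetP => e He; rewrite !in_setU !in_setI He /=.
  case Hey': (e \in hx y'); first by rewrite orbT.
  have : e \in sd (hx x') (hx y') by rewrite in_sd He Hey'.
  rewrite -Heq in_sd orbF; by case: (e \in hx x); case: (e \in hx y).
have := subset_leq_card Hsub; rewrite hx_card //.
move=> H6; have := leq_trans H6 (cardU_le _ _).
have := leq_add (cardU_le (hx x' :&: hx x) (hx x' :&: hx y)) (hx_meet Hxy').
move=> H2 H3; have := leq_trans H3 H2.
have := leq_add (hx_meet N1) (hx_meet N2).
move=> H4 H5; have := leq_trans H5 (leq_add H4 (leqnn 1)).
by [].
Qed.

Lemma squareC c g c' g' : c \in S -> g \in S -> c' \in S -> g' \in S -> c != g -> c' != g' ->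
  sd (hx c) (hx g) = sd (hx c') (hx g') -> (c' = c /\ g' = g) \/ (c' = g /\ g' = c).
Proof.
move=> Hc Hg Hc' Hg' Ncg Ncg' Heq.
have K1 := square_key Hc Hg Hc' Hg' Ncg' Heq.
have K2 : g' = c \/ g' = g.
  apply: (square_key Hc Hg Hg' Hc'); first by rewrite eq_sym.
  by rewrite Heq sdC.
case: K1 => E1; case: K2 => E2; subst; try by [left | right]; by rewrite eqxx in Ncg'.
Qed.

Section GS.
Variables (k : nat) (M0 : {set E}) (h : 'I_k -> cell).
Hypothesis hS : forall j, h j \in S.
Hypothesis hdisj : forall i j, i != j -> forall v, v \in hex_verts (h i) -> v \notin hex_verts (h j).
Hypothesis hM0 : pm M0.
Hypothesis halt : forall j, pm (sd M0 (hx (h j))).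

Definition U (a : {set 'I_k}) := (\bigcup_(j in a) hx (h j))%SET.
Definition FF := M0 :|: U setT.
Definition ff a := sd M0 (U a).

Lemma h_inj : injective h.
Proof.
move=> i j Eij; case: (eqVneq i j) => // /hdisj H.
by have := H (anchor (h i)) (V_anchor _); rewrite Eij V_anchor.
Qed.

Lemma vert_uniq i j v : v \in hex_verts (h i) -> v \in hex_verts (h j) -> i = j.
Proof.
move=> Hi Hj; case: (eqVneq i j) => // /hdisj H.
by rewrite (negbTE (H v Hi)) in Hj.
Qed.

Lemma hx_disj i j e : e \in hx (h i) -> e \in hx (h j) -> i = j.
Proof.
move=> Hi Hj; apply: (vert_uniq (v := (val e).1)).
  exact: hx_vert Hi (at_incid1 e).
exact: hx_vert Hj (at_incid1 e).
Qed.

Lemma U_mem a j e : e \in hx (h j) -> (e \in U a) = (j \in a).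
Proof.
move=> He; apply/bigcupP/idP => [[i Hi Hi']|Hj].
  by rewrite (hx_disj He Hi').
by exists j.
Qed.

Lemma U_mem0 a e : (forall j, e \notin hx (h j)) -> e \notin U a.
Proof. by move=> H; apply/bigcupP => [[i _ Hi]]; have := H i; rewrite Hi. Qed.

Lemma U_at a j v : v \in hex_verts (h j) ->
  U a :&: at_ v = if j \in a then hx (h j) :&: at_ v else set0.
Proof.
move=> Hv; apply/setP => e; apply/idP/idP.
  rewrite in_setI => /andP [/bigcupP [i Hi He] Hv'].
  have Eij : i = j by apply: (vert_uniq (hx_vert He Hv') Hv).
  by subst; rewrite Hi in_setI He Hv'.
case: ifP => Hj; last by rewrite in_set0.
rewrite !in_setI => /andP [He Hv']; rewrite Hv' andbT; apply/bigcupP; by exists j.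
Qed.

Lemma U_at0 a v : (forall j, v \notin hex_verts (h j)) -> U a :&: at_ v = set0.
Proof.
move=> Hn; apply/setP => e; rewrite in_setI in_set0; apply/negP => /andP [/bigcupP [i _ He] Hv'].
by have := Hn i; rewrite (hx_vert He Hv').
Qed.

Lemma M0_at j v : v \in hex_verts (h j) -> M0 :&: at_ v \subset hx (h j).
Proof. move=> Hv; exact: alt_local hM0 (halt j) (hS j) Hv. Qed.

Lemma ff_pm a : pm (ff a).
Proof.
move=> v Hv; rewrite /ff sdI.
case: (pickP (fun j => v \in hex_verts (h j))) => [j Hj|Hn].
  rewrite (U_at a Hj); case: ifP => _; last by rewrite sd0 hM0.
  by rewrite -sdI; apply: halt.
by rewrite U_at0 ?sd0 ?hM0 // => j; rewrite Hn.
Qed.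

Lemma FF_at_hex j v : v \in hex_verts (h j) -> FF :&: at_ v = hx (h j) :&: at_ v.
Proof.
move=> Hv; rewrite /FF setIUl (U_at _ Hv) in_setT; apply/setUidPr.
by rewrite subsetI M0_at // subsetIr.
Qed.

Lemma FF_at0 v : (forall j, v \notin hex_verts (h j)) -> FF :&: at_ v = M0 :&: at_ v.
Proof. by move=> Hn; rewrite /FF setIUl U_at0 // setU0. Qed.

Lemma hexcomp_h j : hex_comp FF (h j).
Proof.
apply/and3P; split; first exact: hS.
  apply/forallP => e; apply/implyP => He; rewrite in_setU; apply/orP; right.
  by rewrite (@U_mem _ j) ?in_setT // in_set.
by apply/allP => u Hu; rewrite degE (FF_at_hex Hu) (hx_at2 (hS j) Hu).
Qed.

Lemma nohex_end v e : (forall j, v \notin hex_verts (h j)) -> M0 :&: at_ v = [set e] ->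
  forall u, e \in at_ u -> forall j, u \notin hex_verts (h j).
Proof.
move=> Hn He u Hu j; apply/negP => Hj.
have HeMv : e \in M0 :&: at_ v by rewrite He set11.
move: (HeMv); rewrite in_setI => /andP [HeM Hev].
have Hej : e \in hx (h j) by apply: (subsetP (M0_at Hj)); rewrite in_setI HeM Hu.
by have := Hn j; rewrite (hx_vert Hej Hev).
Qed.

Lemma GS1 : clar_cover FF.
Proof.
apply/forallP => vv; set v := val vv.
case: (pickP (fun j => v \in hex_verts (h j))) => [j Hj|Hn].
  apply/orP; left; apply/existsP; exists [` hS j]; by rewrite /= hexcomp_h Hj.
have Hn' : forall j, v \notin hex_verts (h j) by move=> j; rewrite Hn.
have [e He] := pm1 hM0 (fsvalP vv).
have HeMv : e \in M0 :&: at_ v by rewrite He set11.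
move: (HeMv); rewrite in_setI => /andP [HeM Hev].
have deg1 u : e \in at_ u -> deg FF u == 1.
  move=> Hu; rewrite degE FF_at0; last exact: nohex_end Hn' He u Hu.
  by rewrite hM0 // (end_HV (e := e)) //; move: Hu; rewrite in_set.
apply/orP; right; apply/existsP; exists e.
rewrite /edge_comp in_setU HeM /= !deg1 ?at_incid1 ?at_incid2 //.
by move: Hev; rewrite in_set.
Qed.

Lemma hexcomp_FF (c : cell) : hex_comp FF c -> exists j, c = h j.
Proof.
case/and3P => Hc Hall Hdeg.
set v := anchor c.
have Hv : v \in hex_verts c by exact: V_anchor.
have Hd : deg FF v == 2 by exact: (allP Hdeg).
case: (pickP (fun j => v \in hex_verts (h j))) => [j Hj|Hn]; last first.
  have Hn' : forall j, v \notin hex_verts (h j) by move=> j; rewrite Hn.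
  by move: Hd; rewrite degE FF_at0 // hM0 // (HV_in Hc Hv).
exists j.
have [a [b [Ha Hb Hab]]] := hx_at Hc Hv.
have Hab' : a != b by apply/negP => /eqP E1; subst; case: (hAB Ha Hb).
have sub : hx c :&: at_ v \subset hx (h j) :&: at_ v.
  rewrite -(FF_at_hex Hj); apply/subsetP => x; rewrite !in_setI => /andP [Hx1 ->].
  by rewrite andbT; have := forallP Hall x; rewrite in_set in Hx1; rewrite Hx1.
have Ha1 : a \in hx c :&: at_ v by rewrite Hab in_set2 eqxx.
have Hb1 : b \in hx c :&: at_ v by rewrite Hab in_set2 eqxx orbT.
have Ha2 := subsetP sub a Ha1; have Hb2 := subsetP sub b Hb1.
move: Ha1 Hb1 Ha2 Hb2; rewrite !in_setI => /andP [Ha1 _] /andP [Hb1 _] /andP [Ha2 _] /andP [Hb2 _].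
exact: hx_share Ha1 Ha2 Hb1 Hb2 Hab'.
Qed.

Lemma GS2 : nhex FF = k.
Proof.
rewrite /nhex.
have -> : [set c : S | hex_comp FF (val c)] = [set [` hS j] | j in 'I_k].
  apply/setP => c; rewrite in_set; apply/idP/imsetP => [H|[j _ ->]].
    have [j Ej] := hexcomp_FF H; exists j => //; exact: val_inj.
  exact: hexcomp_h.
rewrite card_imset ?card_ord // => i j Eij; apply: h_inj.
by have := congr1 val Eij.
Qed.

Lemma constP N j : pm N -> N \subset FF -> forall e1 e2, e1 \in hx (h j) -> e2 \in hx (h j) ->
  ((e1 \in N) != (e1 \in M0)) = ((e2 \in N) != (e2 \in M0)).
Proof.
move=> HN Hsub; apply: (@hx_chain (h j) (fun e => (e \in N) != (e \in M0)) (hS j)).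
move=> v e1 e2 Hv H1 H2 Hv1 Hv2.
have Hv' : v \in HV S := HV_in (hS j) Hv.
have [a [b [Ha Hb Hab]]] := hx_at (hS j) Hv.
have Hab' : (a == b) = false by apply/negP => /eqP E1; subst; case: (hAB Ha Hb).
have Hba : (b == a) = false by rewrite eq_sym.
have [n Hn] := pm1 HN Hv'; have [m Hm] := pm1 hM0 Hv'.
have nab : n \in [set a; b].
  rewrite -Hab -(FF_at_hex Hv); have : n \in N :&: at_ v by rewrite Hn set11.
  by rewrite !in_setI => /andP [Hn1 ->]; rewrite (subsetP Hsub _ Hn1).
have mab : m \in [set a; b].
  rewrite -Hab; have Hm1 : m \in M0 :&: at_ v by rewrite Hm set11.
  by rewrite in_setI (subsetP (M0_at Hv) _ Hm1); move: Hm1; rewrite in_setI => /andP [].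
have memN x : x \in at_ v -> (x \in N) = (x == n).
  by move=> Hx; have := in_setI x N (at_ v); rewrite Hn in_set1 Hx andbT => ->.
have memM x : x \in at_ v -> (x \in M0) = (x == m).
  by move=> Hx; have := in_setI x M0 (at_ v); rewrite Hm in_set1 Hx andbT => ->.
have e1ab : e1 \in [set a; b] by rewrite -Hab in_setI H1 Hv1.
have e2ab : e2 \in [set a; b] by rewrite -Hab in_setI H2 Hv2.
rewrite !memN ?memM //.
move: nab mab e1ab e2ab; rewrite !in_set2.
by do 4 case/orP => /eqP ->; rewrite ?eqxx ?Hab' ?Hba.
Qed.

Definition aN (N : {set E}) := [set j | [exists e in hx (h j), (e \in N) != (e \in M0)]].

Lemma GS3 N : pm N -> N \subset FF -> N = ff (aN N).
Proof.
move=> HN Hsub; apply/setP => e; rewrite /ff in_sd.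
case: (pickP (fun j => e \in hx (h j))) => [j Hj|Hn].
  rewrite (U_mem _ Hj) in_set.
  have -> : [exists e0 in hx (h j), (e0 \in N) != (e0 \in M0)] = ((e \in N) != (e \in M0)).
    apply/existsP/idP => [[e0 /andP [He0 P0]]|P0]; last by exists e; rewrite Hj P0.
    by rewrite -(constP HN Hsub He0 Hj).
  by case: (e \in N); case: (e \in M0).
have Hn' : forall j, e \notin hx (h j) by move=> j; rewrite Hn.
rewrite (negbTE (U_mem0 _ Hn')) addbF.
apply/idP/idP => [HeN|HeM].
  by move: (subsetP Hsub _ HeN); rewrite in_setU (negbTE (U_mem0 _ Hn')) orbF.
set v := (val e).1.
have Hv : v \in HV S by exact: (end_HV (V_incid1 _)).
have Hvn : forall j, v \notin hex_verts (h j).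
  move=> j; apply/negP => Hj.
  have : e \in hx (h j) by apply: (subsetP (M0_at Hj)); rewrite in_setI HeM at_incid1.
  by rewrite (negbTE (Hn' j)).
have [n Hnn] := pm1 HN Hv.
have : n \in FF :&: at_ v.
  have : n \in N :&: at_ v by rewrite Hnn set11.
  by rewrite !in_setI => /andP [Hn1 ->]; rewrite (subsetP Hsub _ Hn1).
rewrite FF_at0 //.
have [m Hm] := pm1 hM0 Hv.
have : e \in M0 :&: at_ v by rewrite in_setI HeM at_incid1.
rewrite Hm !in_set1 => /eqP -> /eqP En; subst n.
have : m \in N :&: at_ v by rewrite Hnn set11.
by rewrite in_setI => /andP [].
Qed.

Lemma ff_sub a : ff a \subset FF.
Proof.
apply/subsetP => e; rewrite in_sd in_setU; case: (e \in M0) => //= /bigcupP [j _ Hj].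
by apply/bigcupP; exists j.
Qed.

Lemma sd_ff a b : sd (ff a) (ff b) = U ((a :\: b) :|: (b :\: a)).
Proof.
apply/setP => e; rewrite !in_sd.
case: (pickP (fun j => e \in hx (h j))) => [j Hj|Hn].
  rewrite !(U_mem _ Hj) in_setU !in_setD.
  by case: (j \in a); case: (j \in b); case: (e \in M0).
have Hn' : forall j, e \notin hx (h j) by move=> j; rewrite Hn.
rewrite !(negbTE (U_mem0 _ Hn')).
by case: (e \in M0).
Qed.

Lemma U1 j : U [set j] = hx (h j).
Proof. by rewrite /U big_set1. Qed.

Lemma U0 : U set0 = set0.
Proof. by rewrite /U big_set0. Qed.

Lemma hx_ne j : exists e, e \in hx (h j).
Proof.
have : 0 < #|hx (h j)| by rewrite hx_card.
by rewrite card_gt0 => /set0Pn.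
Qed.

Lemma GS4 a b : res_adj (ff a) (ff b) = cube_adj a b.
Proof.
rewrite res_adjE sd_ff /cube_adj; set D := (a :\: b) :|: (b :\: a).
apply/existsP/idP => [[c /eqP Hc] | /cards1P [j ->]]; last first.
  by exists [` hS j]; rewrite /= U1.
have c6 := hx_card (fsvalP c).
case ED : #|D| => [|[|n]] //.
  move/eqP: ED; rewrite cards_eq0 => /eqP ED.
  by move: c6; rewrite -Hc ED U0 cards0.
have : 1 < #|D| by rewrite ED.
case/card_gt1P => i [j [Hi Hj Hij]].
have Hsub : hx (h i) :|: hx (h j) \subset U D.
  by rewrite subUset; apply/andP; split; apply/subsetP => x Hx; apply/bigcupP; [exists i|exists j].
have Hdisj : hx (h i) :&: hx (h j) = set0.
  apply/setP => x; rewrite in_setI in_set0; apply/negP => /andP [H1 H2].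
  by have := hx_disj H1 H2; move/eqP: Hij.
have := subset_leq_card Hsub.
by rewrite Hc cardsU Hdisj cards0 subn0 !hx_card ?fsvalP.
Qed.

Lemma GS5 : injective ff.
Proof.
move=> a b Eab; apply/setP => j.
have key : j \in (a :\: b) :|: (b :\: a) -> False.
  move=> Hj; have [e He] := hx_ne j.
  have : e \in U ((a :\: b) :|: (b :\: a)) by apply/bigcupP; exists j.
  by rewrite -sd_ff Eab in_sd addbb.
case Ha: (j \in a); case Hb: (j \in b) => //; exfalso; apply: key;
  by rewrite in_setU !in_setD Ha Hb.
Qed.

Lemma FF_union e : (e \in FF) = [exists a, e \in ff a].
Proof.
apply/idP/existsP => [H|[a Ha]]; last exact: (subsetP (ff_sub a) e Ha).
case HM: (e \in M0).
  by exists set0; rewrite in_sd U0 in_set0 HM.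
move: H; rewrite in_setU HM /= => /bigcupP [j _ Hj].
by exists [set j]; rewrite in_sd U1 HM Hj.
Qed.

End GS.

Lemma sdKl A B : sd A (sd A B) = B.
Proof. by apply/setP => e; rewrite !in_sd addbA addbb. Qed.

Lemma cube_adj_add k (a : {set 'I_k}) j : j \notin a -> cube_adj a (j |: a).
Proof.
move=> Hj; rewrite /cube_adj.
have -> : (a :\: (j |: a)) :|: ((j |: a) :\: a) = [set j].
  apply/setP => x; rewrite in_setU !in_setD !in_setU1 in_set1.
  case: (eqVneq x j) => [->|_] /=; first by rewrite (negbTE Hj).
  by case: (x \in a).
by rewrite cards1.
Qed.

Section Cube.
Variables (k : nat) (f : {set 'I_k} -> {set E}).
Hypothesis f_inj : injective f.
Hypothesis f_pm : forall a, pm (f a).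
Hypothesis f_adj : forall a b, res_adj (f a) (f b) = cube_adj a b.

Lemma adj_hex a b : cube_adj a b -> exists2 c, c \in S & f b = sd (f a) (hx c).
Proof.
rewrite -f_adj res_adjE => /existsP [c /eqP Hc]; exists (val c); first exact: fsvalP.
by rewrite -Hc sdKl.
Qed.

Lemma cube_hex : exists h : 'I_k -> cell, forall j, h j \in S /\ f [set j] = sd (f set0) (hx (h j)).
Proof.
have H : forall j : 'I_k, exists c : cell, c \in S /\ f [set j] = sd (f set0) (hx c).
  move=> j; have Hj : j \notin (set0 : {set 'I_k}) by rewrite in_set0.
  have [c Hc Ec] := adj_hex (cube_adj_add Hj).
  by exists c; rewrite -Ec setU0.
by case: (fin_all_exists H) => h Hh; exists h.
Qed.

Variable h : 'I_k -> cell.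
Hypothesis hS : forall j, h j \in S.
Hypothesis hj : forall j, f [set j] = sd (f set0) (hx (h j)).

Lemma square (a : {set 'I_k}) (i j : 'I_k) : i != j -> i \notin a -> j \notin a ->
  f (i |: a) = sd (f a) (hx (h i)) -> f (j |: a) = sd (f a) (hx (h j)) ->
  f (j |: (i |: a)) = sd (f (i |: a)) (hx (h j)).
Proof.
move=> Nij Hia Hja Ei Ej.
have Hji : j \notin i |: a by rewrite in_setU1 (negbTE Hja) orbF eq_sym.
have Hij : i \notin j |: a by rewrite in_setU1 (negbTE Hia) orbF.
have [g Hg Eg] := adj_hex (cube_adj_add Hji).
have [g' Hg' Eg'] := adj_hex (cube_adj_add Hij).
rewrite setUCA in Eg'.
have N1 : h i != g.
  apply/eqP => E1; move: Eg; rewrite Ei -E1 sdK => /f_inj Ea.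
  by move: (setU11 j (i |: a)); rewrite Ea (negbTE Hja).
have N2 : h j != g'.
  apply/eqP => E1; move: Eg'; rewrite Ej -E1 sdK => /f_inj Ea.
  by move: (setU11 j (i |: a)); rewrite Ea (negbTE Hja).
have Heq : sd (hx (h i)) (hx g) = sd (hx (h j)) (hx g').
  move: Eg; rewrite Eg' Ei Ej => H; apply/setP => e; move/setP/(_ e): H.
  rewrite !in_sd.
  by case: (e \in f a); case: (e \in hx (h i)); case: (e \in hx g);
     case: (e \in hx (h j)); case: (e \in hx g').
case: (squareC (hS i) Hg (hS j) Hg' N1 N2 Heq) => [[E1 E2] | [E1 E2]].
  have : f (j |: a) = f (i |: a) by rewrite Ei Ej E1.
  move/f_inj => Ea; by move: (setU11 j a); rewrite Ea (negbTE Hji).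
by rewrite Eg E1.
Qed.

Lemma step n : forall a : {set 'I_k}, #|a| = n -> forall j : 'I_k, j \notin a -> f (j |: a) = sd (f a) (hx (h j)).
Proof.
elim: n => [|n IH] a Ha j Hj.
  by move/eqP: Ha; rewrite cards_eq0 => /eqP ->; rewrite setU0 hj.
have : 0 < #|a| by rewrite Ha.
rewrite card_gt0 => /set0Pn [i Hi].
have [a' [Ea Hia' Ha']] : exists a', [/\ a = i |: a', i \notin a' & #|a'| = n].
  exists (a :\ i); split; [by rewrite setD1K | by rewrite setD11 | ].
  by move: Ha; rewrite (cardsD1 i) Hi add1n => [[]].
subst a.
have Nij : i != j by apply/eqP => E1; subst; rewrite setU11 in Hj.
have Hja' : j \notin a' by apply/negP => H; rewrite in_setU1 H orbT in Hj.
exact: square Nij Hia' Hja' (IH _ Ha' _ Hia') (IH _ Ha' _ Hja').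
Qed.

Lemma hdisj (i j : 'I_k) : i != j -> forall v, v \in hex_verts (h i) -> v \notin hex_verts (h j).
Proof.
move=> Nij v Hvi; apply/negP => Hvj.
set M' := f [set i].
have E1 : sd M' (hx (h i)) = f set0 by rewrite /M' hj sdK.
have Hji : j \notin [set i] by rewrite in_set1 eq_sym.
have Hij : i \notin [set j] by rewrite in_set1.
have Eij : f (j |: [set i]) = sd M' (hx (h j)) := step (cards1 i) Hji.
have Eji : f (i |: [set j]) = sd (f [set j]) (hx (h i)) := step (cards1 j) Hij.
rewrite setUC in Eji.
set N := f (j |: [set i]) in Eij Eji.
have pmM'i : pm (sd M' (hx (h i))) by rewrite E1; apply: f_pm.
have pmN : pm (sd M' (hx (h j))) by rewrite -Eij; apply: f_pm.
have pmNi : pm (sd N (hx (h i))) by rewrite Eji sdK; apply: f_pm.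
have [e He Hei] := alt_edge (f_pm _) pmM'i (hS i) Hvi.
have HeMv : e \in M' :&: at_ v by rewrite He set11.
have Hej : e \in hx (h j) := subsetP (alt_local (f_pm _) pmN (hS j) Hvj) e HeMv.
have Hev : e \in at_ v by move: HeMv; rewrite in_setI => /andP [].
have [a [b [Ha Hb Hab]]] := hx_at (hS j) Hvj.
have Nab : a != b by apply/negP => /eqP E2; subst; case: (hAB Ha Hb).
have [e' He'1 He'2] : exists2 e', e' \in hx (h j) :&: at_ v & e' != e.
  have : e \in hx (h j) :&: at_ v by rewrite in_setI Hej Hev.
  rewrite Hab in_set2 => /orP [] /eqP ->; [exists b | exists a];
    rewrite ?in_set2 ?eqxx ?orbT // eq_sym //.
move: He'1; rewrite in_setI => /andP [He'j He'v].
have He'M : e' \notin M'.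
  apply/negP => H; have : e' \in M' :&: at_ v by rewrite in_setI H He'v.
  by rewrite He in_set1 (negbTE He'2).
have He'N : e' \in N by rewrite Eij in_sd (negbTE He'M) He'j.
have He'i : e' \in hx (h i).
  apply: (subsetP (alt_local (f_pm _) pmNi (hS i) Hvi)); by rewrite in_setI He'N He'v.
have Eh : h i = h j by apply: (hx_share Hei Hej He'i He'j); rewrite eq_sym.
have : f [set i] = f [set j] by rewrite !hj Eh.
move/f_inj/setP/(_ i); rewrite !in_set1 eqxx => /esym /eqP Eij'.
by rewrite Eij' eqxx in Nij.
Qed.

Lemma f_ff (a : {set 'I_k}) : f a = ff (f set0) h a.
Proof.
move: {2}#|a| (erefl #|a|) => n; elim: n a => [|n IH] a Ha.
  by move/eqP: Ha; rewrite cards_eq0 => /eqP ->; rewrite /ff U0 sd0.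
have : 0 < #|a| by rewrite Ha.
rewrite card_gt0 => /set0Pn [i Hi].
have [a' [Ea Hia' Ha']] : exists a', [/\ a = i |: a', i \notin a' & #|a'| = n].
  exists (a :\ i); split; [by rewrite setD1K | by rewrite setD11 | ].
  by move: Ha; rewrite (cardsD1 i) Hi add1n => [[]].
subst a; rewrite (step Ha' Hia') IH //.
apply/setP => e; rewrite !in_sd.
case: (pickP (fun j => e \in hx (h j))) => [j Hje|Hn].
  rewrite !(U_mem hdisj _ Hje) in_setU1.
  case: (eqVneq j i) => [E2|N2].
    by subst; rewrite Hje (negbTE Hia') /=; case: (e \in f set0).
  have -> : (e \in hx (h i)) = false.
    by apply/negP => Hie; move: N2; rewrite (hx_disj hdisj Hje Hie) eqxx.
  by rewrite addbF.
have Hn' : forall j, e \notin hx (h j) by move=> j; rewrite Hn.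
rewrite (negbTE (U_mem0 (i |: a') Hn')).
rewrite (negbTE (U_mem0 a' Hn')).
by rewrite (negbTE (Hn' i)) !addbF.
Qed.

End Cube.

Lemma hA_at c v : c \in S -> v \in hex_verts c ->
  exists a b, [/\ hA c :&: at_ v = [set a], hB c :&: at_ v = [set b] & hx c :&: at_ v = [set a; b]].
Proof.
move=> Hc Hv; have [a [b [Ha Hb Hab]]] := hx_at Hc Hv.
exists a, b; split => //.
- apply/setP => x; rewrite in_setI in_set1; apply/idP/eqP => [/andP [Hx1 Hx2]|->].
    have : x \in hx c :&: at_ v by rewrite in_setI Hx2 (subsetP (hA_sub c)).
    rewrite Hab in_set2 => /orP [/eqP //|/eqP E1]; subst; case: (hAB Hx1 Hb).
  have : a \in hx c :&: at_ v by rewrite Hab in_set2 eqxx.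
  by rewrite in_setI Ha => /andP [_ ->].
- apply/setP => x; rewrite in_setI in_set1; apply/idP/eqP => [/andP [Hx1 Hx2]|->].
    have : x \in hx c :&: at_ v by rewrite in_setI Hx2 (subsetP (hB_sub c)).
    rewrite Hab in_set2 => /orP [/eqP E1|/eqP //]; subst; case: (hAB Ha Hx1).
  have : b \in hx c :&: at_ v by rewrite Hab in_set2 eqxx orbT.
  by rewrite in_setI Hb => /andP [_ ->].
Qed.

Lemma sd_hAB c X : sd (hA c :&: X) (hx c :&: X) = hB c :&: X.
Proof.
apply/setP => x; rewrite in_sd !in_setI hxE in_setU.
case HA: (x \in hA c); case HB: (x \in hB c); case: (x \in X) => //.
case: (hAB HA HB).
Qed.

Section Clar.
Variable F : {set E}.
Hypothesis HF : clar_cover F.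
Definition Hs := [set c : S | hex_comp F (val c)].
Definition UH := (\bigcup_(c in Hs) hx (val c))%SET.
Definition UA := (\bigcup_(c in Hs) hA (val c))%SET.
Definition M0c := (F :\: UH) :|: UA.

Lemma hc_S (c : S) : val c \in S.
Proof. exact: fsvalP. Qed.

Lemma hc_sub c : c \in Hs -> hx (val c) \subset F.
Proof.
rewrite in_set => /and3P [_ /forallP H _]; apply/subsetP => e He.
by have := H e; rewrite in_set in He; rewrite He.
Qed.

Lemma hc_deg c v : c \in Hs -> v \in hex_verts (val c) -> #|F :&: at_ v| = 2.
Proof.
rewrite in_set => /and3P [_ _ /allP H] Hv; by have /eqP := H v Hv; rewrite degE.
Qed.

Lemma F_at_hc c v : c \in Hs -> v \in hex_verts (val c) -> F :&: at_ v = hx (val c) :&: at_ v.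
Proof.
move=> Hc Hv; apply/eqP; rewrite eq_sym eqEcard setSI ?hc_sub //=.
by rewrite (hc_deg Hc Hv) (hx_at2 (hc_S c) Hv).
Qed.

Lemma hc_unique c d v : c \in Hs -> d \in Hs -> v \in hex_verts (val c) -> v \in hex_verts (val d) -> c = d.
Proof.
move=> Hc Hd Hvc Hvd.
have E1 : hx (val c) :&: at_ v = hx (val d) :&: at_ v by rewrite -!F_at_hc.
have [a [b [Ha Hb Hab]]] := hx_at (hc_S c) Hvc.
have Nab : a != b by apply/negP => /eqP E2; subst; case: (hAB Ha Hb).
have Ha1 : a \in hx (val c) :&: at_ v by rewrite Hab in_set2 eqxx.
have Hb1 : b \in hx (val c) :&: at_ v by rewrite Hab in_set2 eqxx orbT.
have Ha2 := Ha1; have Hb2 := Hb1; rewrite E1 in Ha2 Hb2.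
move: Ha1 Hb1 Ha2 Hb2; rewrite !in_setI => /andP [Ha1 _] /andP [Hb1 _] /andP [Ha2 _] /andP [Hb2 _].
apply: val_inj; exact: hx_share Ha1 Ha2 Hb1 Hb2 Nab.
Qed.

Lemma notHs v : v \in HV S -> (forall c, c \in Hs -> v \notin hex_verts (val c)) ->
  exists e, F :&: at_ v = [set e].
Proof.
move=> Hv Hn; apply/cards1P.
have := forallP HF [` Hv]; case/orP => [/existsP [c /andP [Hc Hvc]]|/existsP [e /andP [/and3P [HeF H1 H2] Hi]]].
  have Hc' : c \in Hs by rewrite in_set.
  by have := Hn c Hc'; rewrite Hvc.
move: Hi; rewrite /incid /= => /orP [] /eqP <-; by rewrite -degE.
Qed.

Lemma M0_at_hc c v : c \in Hs -> v \in hex_verts (val c) -> M0c :&: at_ v = hA (val c) :&: at_ v.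
Proof.
move=> Hc Hv; apply/setP => x; rewrite /M0c in_setI in_setU in_setD.
apply/idP/idP.
  case/andP => /orP [/andP [HnU HxF] Hxv|/bigcupP [d Hd Hxd] Hxv].
    have : x \in F :&: at_ v by rewrite in_setI HxF Hxv.
    rewrite (F_at_hc Hc Hv) in_setI => /andP [Hxc _].
    by move: HnU; have -> : x \in UH by apply/bigcupP; exists c.
  have Hxd' : x \in hx (val d) by apply: (subsetP (hA_sub _)).
  have Ecd := hc_unique Hd Hc (hx_vert Hxd' Hxv) Hv.
  by subst; rewrite in_setI Hxd Hxv.
rewrite in_setI => /andP [Hx1 ->]; rewrite andbT; apply/orP; right.
by apply/bigcupP; exists c.
Qed.

Lemma M0_at_no v : (forall c, c \in Hs -> v \notin hex_verts (val c)) ->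
  M0c :&: at_ v = F :&: at_ v.
Proof.
move=> Hn; apply/setP => x; rewrite /M0c !in_setI in_setU in_setD.
case Hxv: (x \in at_ v); rewrite ?andbF // !andbT.
have HUA : x \notin UA.
  apply/negP => /bigcupP [d Hd Hxd].
  by have := Hn d Hd; rewrite (hx_vert (subsetP (hA_sub _) _ Hxd) Hxv).
have HUH : x \notin UH.
  apply/negP => /bigcupP [d Hd Hxd].
  by have := Hn d Hd; rewrite (hx_vert Hxd Hxv).
by rewrite (negbTE HUA) (negbTE HUH) orbF.
Qed.

Lemma pm_M0c : pm M0c.
Proof.
move=> v Hv.
case: (pickP (fun c => (c \in Hs) && (v \in hex_verts (val c)))) => [c /andP [Hc Hvc]|Hn].
  rewrite (M0_at_hc Hc Hvc).
  by have [a [b [-> _ _]]] := hA_at (hc_S c) Hvc; rewrite cards1.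
have Hn' : forall c, c \in Hs -> v \notin hex_verts (val c).
  by move=> c Hc; apply/negP => Hvc; have := Hn c; rewrite Hc Hvc.
by rewrite M0_at_no //; have [e ->] := notHs Hv Hn'; rewrite cards1.
Qed.

Lemma pm_M0c_alt c : c \in Hs -> pm (sd M0c (hx (val c))).
Proof.
move=> Hc v Hv; rewrite sdI.
case: (boolP (v \in hex_verts (val c))) => Hvc.
  rewrite (M0_at_hc Hc Hvc) sd_hAB.
  by have [a [b [_ -> _]]] := hA_at (hc_S c) Hvc; rewrite cards1.
by rewrite hx_at_out // sd0 pm_M0c.
Qed.

Definition hc (j : 'I_#|Hs|) : cell := val (enum_val j).

Lemma hc_inS j : hc j \in S.
Proof. exact: fsvalP. Qed.

Lemma hc_disj i j : i != j -> forall v, v \in hex_verts (hc i) -> v \notin hex_verts (hc j).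
Proof.
move=> Nij v Hi; apply/negP => Hj.
have := hc_unique (enum_valP i) (enum_valP j) Hi Hj.
by move/enum_val_inj => E1; rewrite E1 eqxx in Nij.
Qed.

Lemma hc_alt j : pm (sd M0c (hx (hc j))).
Proof. exact: pm_M0c_alt (enum_valP j). Qed.

Lemma F_FF : F = FF M0c hc.
Proof.
apply/setP => e; rewrite /FF /M0c !in_setU in_setD.
have EU : (e \in U hc setT) = (e \in UH).
  apply/bigcupP/bigcupP => [[j _ Hj]|[c Hc Hec]].
    by exists (enum_val j); rewrite ?enum_valP.
  exists (enum_rank_in Hc c); rewrite ?in_setT //.
  by rewrite /hc enum_rankK_in.
rewrite EU.
case HUH: (e \in UH); rewrite ?orbT ?orbF /=.
  by move: HUH => /bigcupP [c Hc Hec]; rewrite (subsetP (hc_sub Hc) _ Hec).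
apply/idP/idP => [->|/orP [] //]; first by [].
move=> /bigcupP [c Hc Hec].
by move: HUH; have -> : e \in UH by apply/bigcupP; exists c; rewrite // (subsetP (hA_sub _)).
Qed.

End Clar.


Definition Psi (F : {set E}) := [set M : {set E} | perfect_matching M && (M \subset F)].

Lemma Psi_FF {k} {M0} {h : 'I_k -> cell} :
  (forall j, h j \in S) ->
  (forall i j, i != j -> forall v, v \in hex_verts (h i) -> v \notin hex_verts (h j)) ->
  pm M0 -> (forall j, pm (sd M0 (hx (h j)))) ->
  Psi (FF M0 h) = [set ff M0 h a | a in [set: {set 'I_k}]].
Proof.
move=> hS hdisj hM0 halt; apply/setP => M; rewrite in_set.
apply/andP/imsetP => [[/pmP HM Hsub]|[a _ ->]].
  by exists (aN M0 h M) => //; apply: GS3.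
split; first by apply/pmP; apply: ff_pm.
exact: ff_sub.
Qed.

Lemma Psi_cube {k} {M0} {h : 'I_k -> cell} :
  (forall j, h j \in S) ->
  (forall i j, i != j -> forall v, v \in hex_verts (h i) -> v \notin hex_verts (h j)) ->
  pm M0 -> (forall j, pm (sd M0 (hx (h j)))) ->
  [forall M in Psi (FF M0 h), perfect_matching M] && induces_cube k (Psi (FF M0 h)).
Proof.
move=> hS hdisj hM0 halt; apply/andP; split.
  by apply/forall_inP => M; rewrite in_set => /andP [].
apply/existsP; exists [ffun a => ff M0 h a]; apply/and3P; split.
- by apply/injectiveP => a b; rewrite !ffunE; apply: GS5.
- rewrite (Psi_FF hS hdisj hM0 halt); apply/eqP/setP => M.
  by apply/imsetP/imsetP => [[a Ha ->]|[a Ha ->]]; exists a; rewrite ?ffunE.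
- apply/forallP => a; apply/forallP => b; rewrite !ffunE.
  by apply/eqP; apply: GS4.
Qed.

Lemma Phi_Psi (F : {set E}) : clar_cover F ->
  forall e, (e \in F) = [exists M in Psi F, e \in M].
Proof.
move=> HF e.
have hM0 := pm_M0c HF.
rewrite [in LHS](F_FF F) FF_union.
rewrite [in RHS](F_FF F) (Psi_FF (hc_inS (F:=F)) (hc_disj (F:=F)) hM0 (hc_alt HF)).
apply/existsP/existsP => [[a Ha]|[M /andP [/imsetP [a _ ->] Ha]]].
  by exists (ff (M0c F) (hc (F:=F)) a); rewrite Ha andbT; apply/imsetP; exists a.
by exists a.
Qed.

Theorem count k : zClar S k = alpha S k.
Proof.
rewrite /zClar /alpha.
set A := [set F : {set E} | clar_cover F && (nhex F == k)].
set B := [set W : {set {set E}} | [forall M in W, perfect_matching M] && induces_cube k W].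
have -> : B = Psi @: A.
  apply/setP => W; rewrite in_set; apply/idP/imsetP => [/andP [HPM /existsP [f /and3P [Hinj /eqP Him /forallP Hadj]]]|[F HF ->]].
    have f_inj : injective f by apply/injectiveP.
    have f_pm : forall a, pm (f a).
      move=> a; apply/pmP; apply: (forall_inP HPM); rewrite -Him; exact: imset_f.
    have f_adj : forall a b, res_adj (f a) (f b) = cube_adj a b.
      by move=> a b; have /eqP -> := forallP (Hadj a) b.
    have [h Hh] := cube_hex f_adj.
    have hS : forall j, h j \in S by move=> j; case: (Hh j).
    have hj : forall j, f [set j] = sd (f set0) (hx (h j)) by move=> j; case: (Hh j).
    have hd := hdisj f_inj f_pm f_adj hS hj.
    have hM0 := f_pm set0.
    have halt : forall j, pm (sd (f set0) (hx (h j))) by move=> j; rewrite -hj.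
    exists (FF (f set0) h).
      by rewrite in_set GS1 // (GS2 hS hd hM0 halt) eqxx.
    rewrite (Psi_FF hS hd hM0 halt) -Him; apply/setP => M.
    have Ef : forall a, ff (f set0) h a = f a.
      by move=> a; rewrite [in RHS](f_ff f_inj f_pm f_adj hS hj a).
    by apply/imsetP/imsetP => [[a Ha ->]|[a Ha ->]]; exists a; rewrite ?Ef.
  move: HF; rewrite in_set => /andP [HF /eqP Hk]; subst k.
  have := Psi_cube (hc_inS (F:=F)) (hc_disj (F:=F)) (pm_M0c HF) (hc_alt HF).
  by rewrite -(F_FF F).
rewrite card_in_imset // => F1 F2; rewrite !in_set => /andP [H1 _] /andP [H2 _] E12.
apply/setP => e; by rewrite (Phi_Psi H1) (Phi_Psi H2) E12.
Qed.


End Sets.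

Unset Implicit Arguments.

Theorem theorem1 (S : {fset cell}) :
  hexagonal_system S -> kekulean S ->
  forall i : nat, zClar S i = alpha S i.
Proof.
move=> _ _ i; exact: count.
Qed.
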